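(* Let $n,k$ be positive integers and $K=\min(\lfloor (n+k)/2\rfloor, n)$. Then \[ |\mathrm{Hom}^1(P_n,P_k)| = \sum_{l=\lceil (n-1)/2\rceil}^{K-1} |\mathcal L(l,\, n-1-l;\, 0,\, k-1)|. \]
   Context: For a positive integer $m$, $P_m$ denotes the path with vertex set $[m]=\{1,\dots,m\}$ in which $i$ and $j$ are adjacent iff $|i-j|=1$; $\mathrm{Hom}(P_n,P_k)$ is the set of maps $f:[n]\to[k]$ with $|f(i)-f(i+1)|=1$ for $1\le i\le n-1$, and $\mathrm{Hom}^1(P_n,P_k)=\{f\in\mathrm{Hom}(P_n,P_k): f(1)=1\}$. A lattice path from the origin to $(a,b)\in\mathbb N^2$ is a sequence of points of $\mathbb Z^2$ starting at $(0,0)$ and ending at $(a,b)$, each step being $(1,0)$ (east) or $(0,1)$ (north). For nonnegative integers $a,b,t,s$ with $a+t\ge b\ge a-s$, $\mathcal L(a,b;t,s)$ denotes the set of lattice paths from $(0,0)$ to $(a,b)$ all of whose points $(x,y)$ satisfy $x-s\le y\le x+t$. *)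

(* Defs.v *)
From mathcomp Require Import all_boot.
Set Implicit Arguments. Unset Strict Implicit. Unset Printing Implicit Defensive.

(* Vertex j+1 of P_m is represented by the ordinal j : 'I_m (0-based).
   |x - y| = 1 for naturals is (x == y.+1) || (y == x.+1). *)
Definition adjP (x y : nat) : bool := (x == y.+1) || (y == x.+1).

Definition Hom (n k : nat) : {set {ffun 'I_n -> 'I_k}} :=
  [set f : {ffun 'I_n -> 'I_k} |
     [forall i : 'I_n, forall j : 'I_n,
        (val j == (val i).+1) ==> adjP (f i) (f j)]].

(* Hom^1(P_n, P_k): those f with f(1) = 1, i.e. f maps vertex 0 to vertex 0
   (0-based).  For n = 0 there is no vertex 1; the condition is vacuous. *)
Definition Hom1 (n k : nat) : {set {ffun 'I_n -> 'I_k}} :=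
  [set f in Hom n k | [forall i : 'I_n, (val i == 0) ==> (val (f i) == 0)]].

(* A lattice path from (0,0) to (a,b) with E/N steps is encoded by its step
   sequence: an (a+b)-tuple of booleans (true = east (1,0), false = north (0,1))
   containing exactly a east steps. *)
Definition path_point (p : seq bool) (i : nat) : nat * nat :=
  (count id (take i p), i - count id (take i p)).

(* L(a,b;t,s): lattice paths from the origin to (a,b) all of whose points
   (x,y) satisfy x - s <= y <= x + t (stated over nat without subtraction). *)
Definition LP (a b t s : nat) : {set (a + b).-tuple bool} :=
  [set p : (a + b).-tuple bool |
     (count id p == a) &&
     [forall i : 'I_(a + b).+1,
        let xy := path_point p i in
        (xy.1 <= xy.2 + s) && (xy.2 <= xy.1 + t)]].

(* Main.v *)
Require Import Defs.
From mathcomp Require Import all_boot zify.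
Set Implicit Arguments. Unset Strict Implicit. Unset Printing Implicit Defensive.

Definition pp_ok (K : nat) (s : seq bool) (i : nat) : bool :=
  let xy := path_point s i in (xy.1 <= xy.2 + K) && (xy.2 <= xy.1 + 0).
Definition okseq K (s : seq bool) := all (pp_ok K s) (iota 0 (size s).+1).

Lemma LP_eq a b K : LP a b 0 K =
  [set p : (a+b).-tuple bool | (count id p == a) && okseq K p].
Proof.
apply/setP => p; rewrite !inE; congr (_ && _).
apply/forallP/allP => H i.
- rewrite mem_iota size_tuple add0n => Hi.
  exact: (H (Ordinal Hi)).
- apply: H; by rewrite mem_iota size_tuple add0n ltn_ord.
Qed.

Lemma card_cast N M (P : pred (seq bool)) : N = M ->
  #|[set t : N.-tuple bool | P t]| = #|[set t : M.-tuple bool | P t]|.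
Proof. by move->. Qed.

Section S.
Variables (m K : nat).

Definition FF (f : {ffun 'I_m.+1 -> 'I_K.+1}) i := val (f (inord i)).

Lemma HomP f : reflect (forall i, i < m -> adjP (FF f i) (FF f i.+1)) (f \in Hom m.+1 K.+1).
Proof.
rewrite inE; apply: (iffP forallP) => H.
- move=> i lt.
  have := H (inord i) => /forallP /(_ (inord i.+1)) /implyP; apply.
  by rewrite /= !inordK //; lia.
- move=> i; apply/forallP => j; apply/implyP => /eqP e.
  have := H i; rewrite /FF inord_val.
  have hj := ltn_ord j.
  have -> : inord i.+1 = j.
    by apply: val_inj; rewrite /= e inordK // -e.
  apply; move: e hj => /= e hj; lia.
Qed.

Lemma Hom1P f : f \in Hom1 m.+1 K.+1 ->
  (forall i, i < m -> adjP (FF f i) (FF f i.+1)) /\ FF f 0 = 0.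
Proof.
rewrite inE => /andP [/HomP H /forallP H0]; split => //.
have := H0 (inord 0) => /implyP; rewrite /= inordK // => /(_ isT) /eqP.
by [].
Qed.

Definition sseq f := mkseq (fun i => FF f i.+1 == (FF f i).+1) m.
Lemma size_sseq f : size (sseq f) == m.
Proof. by rewrite size_mkseq. Qed.
Definition h f : m.-tuple bool := Tuple (size_sseq f).

Lemma key f : f \in Hom1 m.+1 K.+1 -> forall i, i <= m ->
  count id (take i (sseq f)) = FF f i + (i - count id (take i (sseq f))).
Proof.
move=> /Hom1P [H H0]; elim=> [|i IH] lt; first by rewrite take0 /= H0.
have hs : i < size (sseq f) by rewrite size_mkseq.
rewrite (take_nth false hs) -cats1 count_cat /= nth_mkseq // addn0.
have ci : count id (take i (sseq f)) <= i.
  by apply: leq_trans (count_size _ _) _; rewrite size_take hs.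
have := IH (ltnW lt); have := H i lt; rewrite /adjP.
case: (boolP (FF f i.+1 == (FF f i).+1)) => [/eqP e|ne] /=.
- move=> _; lia.
- rewrite orbF => /eqP a; lia.
Qed.

Lemma okP s i : okseq K s -> i <= size s ->
  count id (take i s) <= (i - count id (take i s)) + K /\
  i - count id (take i s) <= count id (take i s).
Proof.
move=> /allP /(_ i); rewrite mem_iota add0n ltnS => H /H.
rewrite /pp_ok /path_point /= addn0 => /andP [a b]; by split.
Qed.

Lemma ctake s i : count id (take i s) <= i.
Proof.
apply: leq_trans (count_size _ _) _; rewrite size_take; case: ifP => // /negbT; lia.
Qed.

Lemma ok_sseq f : f \in Hom1 m.+1 K.+1 -> okseq K (sseq f).
Proof.
move=> Hf; apply/allP => i; rewrite mem_iota size_mkseq add0n ltnS => lt.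
rewrite /pp_ok /path_point /=.
have := key Hf lt; have : FF f i < K.+1 by exact: ltn_ord.
by move=> a b; apply/andP; split; lia.
Qed.

Lemma sseq_inj f1 f2 : f1 \in Hom1 m.+1 K.+1 -> f2 \in Hom1 m.+1 K.+1 ->
  sseq f1 = sseq f2 -> f1 = f2.
Proof.
move=> H1 H2 e; apply/ffunP => j; apply: val_inj.
have lj : j <= m by rewrite -ltnS ltn_ord.
have := key H1 lj; have := key H2 lj; rewrite e /FF inord_val.
by move=> a b; apply/eqP; rewrite -(eqn_add2r (j - count id (take j (sseq f2)))) -a -b.
Qed.

Definition gf (s : seq bool) : {ffun 'I_m.+1 -> 'I_K.+1} :=
  [ffun j : 'I_m.+1 => inord (count id (take j s) - (j - count id (take j s)))].

Lemma gFF s i : size s = m -> okseq K s -> i <= m ->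
  FF (gf s) i = count id (take i s) - (i - count id (take i s)).
Proof.
move=> hs ok li; rewrite /FF ffunE /=.
have li' : i < m.+1 by rewrite ltnS.
rewrite (inordK li').
have lis : i <= size s by rewrite hs.
have [a b] := okP ok lis.
rewrite inordK //; lia.
Qed.

Lemma g_in s : size s = m -> okseq K s -> gf s \in Hom1 m.+1 K.+1.
Proof.
move=> hs ok; rewrite inE; apply/andP; split.
- apply/HomP => i lt.
  rewrite !gFF //; last exact: ltnW.
  have hi : i < size s by rewrite hs.
  have [a b] := okP (i:=i) ok (ltnW hi).
  have [c d] := okP (i:=i.+1) ok hi.
  have ci := ctake s i.
  move: a b c d; rewrite (take_nth false hi) -cats1 count_cat /= addn0.
  rewrite /adjP; case: (nth false s i) => /= a b c d; apply/orP; [right|left]; apply/eqP; lia.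
- apply/forallP => j; apply/implyP => /eqP j0.
  rewrite ffunE /= j0 take0 /= inordK //.
Qed.

Lemma sseq_g s : size s = m -> okseq K s -> sseq (gf s) = s.
Proof.
move=> hs ok; apply: (@eq_from_nth _ false); first by rewrite size_mkseq.
rewrite size_mkseq => i lt; rewrite nth_mkseq // !gFF //; last exact: ltnW.
have hi : i < size s by rewrite hs.
have [a b] := okP (i:=i) ok (ltnW hi).
have [c d] := okP (i:=i.+1) ok hi.
have ci := ctake s i.
move: a b c d; rewrite (take_nth false hi) -cats1 count_cat /= addn0.
case: (nth false s i) => /= a b c d; apply/eqP; lia.
Qed.

End S.

Lemma cardHom1 m K : #|Hom1 m.+1 K.+1| = #|[set t : m.-tuple bool | okseq K t]|.
Proof.
have inj : {in Hom1 m.+1 K.+1 &, injective (@h m K)}.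
  move=> f1 f2 H1 H2 e; apply: sseq_inj => //; exact: (congr1 val e).
rewrite -(card_in_imset inj); apply: eq_card => t; rewrite inE.
apply/imsetP/idP.
- by case=> f Hf ->; exact: ok_sseq.
- move=> ok; exists (gf m K t); first exact: g_in (size_tuple t) ok.
  by apply: val_inj; rewrite /= sseq_g // size_tuple.
Qed.

Lemma cardV m K : #|[set t : m.-tuple bool | okseq K t]| =
  \sum_(l < m.+1) #|[set t : m.-tuple bool | (count id t == l) && okseq K t]|.
Proof.
rewrite -sum1_card (partition_big (fun t : m.-tuple bool => (inord (count id t) : 'I_m.+1)) predT) //=.
apply: eq_bigr => l _; rewrite -sum1_card; apply: eq_bigl => t; rewrite !inE andbC.
congr (_ && _).
have hc : count id t < m.+1 by rewrite ltnS -{2}(size_tuple t) count_size.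
apply/eqP/eqP => e.
- by rewrite -e inordK.
- by apply: val_inj; rewrite /= inordK.
Qed.

Lemma hf N : N = odd N + N./2 + N./2 /\ odd N <= 1.
Proof. split; last exact: leq_b1. by rewrite -addnA addnn odd_double_half. Qed.

Lemma endpt m K l (t : m.-tuple bool) : okseq K t -> count id t = l ->
  m - l <= l /\ l <= m - l + K.
Proof.
move=> ok e; have := okP ok (leqnn (size t)).
by rewrite take_size size_tuple e => [[a b]]; split.
Qed.

Theorem mainTheorem3 (n k : nat) (hn : 0 < n) (hk : 0 < k) :
  #|Hom1 n k| =
  \sum_(uphalf (n - 1) <= l < minn ((n + k)./2) n) #|LP l (n - 1 - l) 0 (k - 1)|.
Proof.
move: hn hk; case: n => // m _; case: k => // K _.
rewrite cardHom1 cardV !subn1 !succnK.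
rewrite -(big_mkord xpredT (fun l => #|[set t : m.-tuple bool | (count id t == l) && okseq K t]|)).
set a := uphalf m; set b := minn _ _.
have [h1 o1] := hf m; have [h2 o2] := hf (m.+1 + K.+1).
have ua : a = odd m + m./2 by rewrite /a uphalf_half.
have ab : a <= b by rewrite /b leq_min; apply/andP; split; lia.
have bm : b <= m.+1 by rewrite /b geq_minr.
set G := fun l => #|[set t : m.-tuple bool | (count id t == l) && okseq K t]|.
have -> : \sum_(a <= l < b) #|LP l (m - l) 0 K| = \sum_(a <= l < b) G l.
  apply: eq_big_nat => l /andP [_ lb].
  rewrite LP_eq /G /=; apply: (@card_cast _ _ (fun s => (count id s == l) && okseq K s)); rewrite subnKC //; lia.
have G0 : forall l, (l < a) || (b <= l) -> G l = 0.
  move=> l H; apply/eqP; rewrite cards_eq0; apply/eqP/setP => t.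
  rewrite !inE; apply/negbTE; apply/negP => /andP [/eqP e ok].
  have [c d] := endpt ok e.
  have lm : l <= m by rewrite -e -{2}(size_tuple t) count_size.
  move: H; rewrite /b; case/orP => H; first lia.
  move: H; rewrite geq_min => /orP [H|H]; lia.
rewrite (big_cat_nat _ (n:=a)) //=; last lia.
rewrite (big_cat_nat _ (n:=b) (m:=a)) //=.
rewrite [in X in X + _]big_nat_cond [in X in _ + (_ + X)]big_nat_cond.
rewrite big1; last by move=> l /andP [/andP [_ H] _]; apply: G0; rewrite H.
rewrite [X in _ + (_ + X)]big1; last by move=> l /andP [/andP [H _] _]; apply: G0; rewrite H orbT.
by rewrite add0n addn0.
Qed.
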